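(* Let $\mathcal{H}$ be a hypergraph. Then $\mathcal{H}$ is a hypertree if and only if $Comp(\mathcal{H})$ is a hypertree. Moreover, $\mathcal{H}$ is a hypertree if and only if $\mathcal{B}(Comp(\mathcal{H}))$ is a hypertree.
   Context: A hypergraph $\mathcal{H}$ has a finite vertex set $V(\mathcal{H})$ and a finite family $E(\mathcal{H})$ (repetitions allowed) of nonempty subsets of $V(\mathcal{H})$ (edges). A host tree of $\mathcal{H}$ is a tree with vertex set $V(\mathcal{H})$ in which every edge of $\mathcal{H}$ induces a connected subgraph; $\mathcal{H}$ is a hypertree if it has a host tree. A union $\bigcup_{i=1}^n F_i$ is connected if the intersection graph of the sets $F_1,\dots,F_n$ is connected. The completion $Comp(\mathcal{H})$ is the hypergraph without repeated edges on vertex set $V(\mathcal{H})$ whose edges are $V(\mathcal{H})$, all one-element subsets of $V(\mathcal{H})$, and all proper subsets of $V(\mathcal{H})$ obtainable from edges of $\mathcal{H}$ by applying (in any order and amount) nonempty intersections and connected unions. For a hypergraph $\mathcal{K}$ whose edge set is closed under connected unions, its basis $\mathcal{B}(\mathcal{K})$ is the hypergraph without repeated edges on $V(\mathcal{K})$ whose edges are the edges of $\mathcal{K}$ with more than one vertex that cannot be expressed as a connected union of strictly smaller edges of $\mathcal{K}$. *)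

(* Defs.v *)
From mathcomp Require Import all_boot.
Set Implicit Arguments. Unset Strict Implicit. Unset Printing Implicit Defensive.

(* A hypergraph on the finite vertex set T is a family of nonempty subsets
   of T; a "hypergraph without repeated edges" is represented by a predicate
   on {set T}, a hypergraph with repetitions by a sequence of sets. *)

Section Hyper.
Variable T : finType.

Definition cycle_in (e : rel T) (c : seq T) : Prop :=
  [/\ uniq c, 3 <= size c & cycle e c].

Definition is_tree (e : rel T) : Prop :=
  [/\ symmetric e, irreflexive e,
      (forall x y : T, connect e x y) &
      (forall c : seq T, ~ cycle_in e c)].

Definition induced (e : rel T) (F : {set T}) : rel T :=
  [rel x y | [&& x \in F, y \in F & e x y]].

Definition induces_connected (e : rel T) (F : {set T}) : Prop :=
  forall x y, x \in F -> y \in F -> connect (induced e F) x y.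

Definition host_tree (P : {set T} -> Prop) (e : rel T) : Prop :=
  is_tree e /\ forall F, P F -> induces_connected e F.

Definition hypertree (P : {set T} -> Prop) : Prop := exists e, host_tree P e.

Definition edges_of (E : seq {set T}) : {set T} -> Prop := fun F => F \in E.

Definition intersection_connected (s : seq {set T}) : Prop :=
  forall i j : 'I_(size s),
    connect [rel a b : 'I_(size s) | nth set0 s a :&: nth set0 s b != set0] i j.

Inductive obtainable (E : seq {set T}) : {set T} -> Prop :=
| obt_edge F : F \in E -> obtainable E F
| obt_inter (s : seq {set T}) :
    0 < size s -> (forall F, F \in s -> obtainable E F) ->
    \bigcap_(F <- s) F != set0 -> obtainable E (\bigcap_(F <- s) F)
| obt_union (s : seq {set T}) :
    0 < size s -> (forall F, F \in s -> obtainable E F) ->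
    intersection_connected s -> obtainable E (\bigcup_(F <- s) F).

Definition Comp (E : seq {set T}) : {set T} -> Prop := fun A =>
  A = setT \/ #|A| = 1 \/ (A != setT /\ obtainable E A).

Definition basis (K : {set T} -> Prop) : {set T} -> Prop := fun A =>
  [/\ K A, 1 < #|A| &
      ~ exists s : seq {set T},
          [/\ 0 < size s, (forall F, F \in s -> K F /\ F \proper A),
              intersection_connected s & \bigcup_(F <- s) F = A]].

End Hyper.

(* Main.v *)
Require Import Defs.
From mathcomp Require Import all_boot.
From Stdlib Require Import Classical.
Set Implicit Arguments. Unset Strict Implicit. Unset Printing Implicit Defensive.

Section Aux.
Variable T : finType.
Implicit Types (e : rel T) (A B F : {set T}).

Definition cut e u v : rel T :=
  [rel a b | e a b && ~~ ((a == u) && (b == v) || (a == v) && (b == u))].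

Lemma cut_sym e u v : symmetric e -> symmetric (cut e u v).
Proof.
move=> se a b; rewrite /cut /= se orbC.
by rewrite (andbC (a == v)) (andbC (a == u)).
Qed.

Lemma cut_lemma e u v : is_tree e -> e u v -> ~ connect (cut e u v) u v.
Proof.
case=> se ie _ nc euv /connectP [p pp vE].
case: (shortenP pp) vE => p' pp' up' _ vE.
case: p' pp' up' vE => [|w [|z q]] /=.
- by move=> _ _ vu; rewrite vu ie in euv.
- move=> + _ vw; by rewrite -vw /cut /= !eqxx andbF.
move=> pp' up' vE; apply: (nc (u :: w :: z :: q)); split => //.
rewrite /cycle rcons_path; apply/andP; split.
  by apply: (@sub_path _ (cut e u v)) => [a b /andP []|].
by rewrite /= -vE se.
Qed.

Lemma inter_conn e A B : is_tree e -> induces_connected e A ->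
  induces_connected e B -> induces_connected e (A :&: B).
Proof.
move=> te cA cB x y; rewrite !inE => /andP [xA xB] /andP [yA yB].
have key : forall p x, path (induced e A) x p -> uniq (x :: p) ->
    x \in B -> last x p \in B -> all (mem B) (x :: p).
  elim=> [|a p IH] x0 /=; first by rewrite andbT.
  case/andP=> /and3P [x0A aA ex0a] pp /andP [].
  rewrite inE negb_or => /andP [x0a x0p] up x0B lB.
  case aB: (a \in B).
    by move: (IH a pp up aB lB) => /= /andP [_ ->]; rewrite x0B.
  exfalso; apply: (cut_lemma te ex0a).
  have c1 : connect (cut e x0 a) x0 (last a p).
    apply: (connect_sub _ (cB _ _ x0B lB)) => b c /and3P [bB cB' ebc].
    apply: connect1; rewrite /cut /= ebc /=.
    have ba : (b == a) = false by apply/negbTE; apply: contraFN aB => /eqP <-.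
    have ca : (c == a) = false by apply/negbTE; apply: contraFN aB => /eqP <-.
    by rewrite ba ca !andbF.
  have c2 : connect (cut e x0 a) a (last a p).
    apply/connectP; exists p => //.
    apply: (@sub_in_path _ (predC1 x0) (induced e A)) => //.
      move=> b c /= bx cx /and3P [_ _ ebc]; rewrite /cut /= ebc /=.
      have/negbTE-> : b != x0 := bx; have/negbTE-> : c != x0 := cx.
      by rewrite !andbF.
    by rewrite /= eq_sym x0a /=; apply/allP => z zp /=; apply: contraNneq x0p => <-.
  apply: connect_trans c1 _.
  by rewrite (sym_connect_sym (cut_sym x0 a (let: And4 s _ _ _ := te in s))).
case/connectP: (cA _ _ xA yA) => p pp yE.
case: (shortenP pp) yE => p' pp' up' _ yE.
rewrite yE in yB *.
have aB := key p' x pp' up' xB yB.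
apply/connectP; exists p' => //.
apply: (@sub_in_path _ (mem B) (induced e A)) => //.
move=> b c /= bB cB2 /and3P [bA cA' ebc].
by rewrite /induced /= !inE bA bB cA' cB2 ebc.
Qed.


Lemma conn_mono e A B x y : A \subset B ->
  connect (induced e A) x y -> connect (induced e B) x y.
Proof.
move=> sAB; apply: connect_sub => a b /and3P [aA bA eab].
by apply: connect1; rewrite /induced /= (subsetP sAB _ aA) (subsetP sAB _ bA).
Qed.

Lemma conn_setT e : is_tree e -> induces_connected e setT.
Proof.
case=> _ _ ce _ x y _ _; apply: connect_sub (ce x y) => a b eab.
by apply: connect1; rewrite /induced /= !inE.
Qed.

Lemma bigcap_conn e (s : seq {set T}) : is_tree e ->
  (forall F, F \in s -> induces_connected e F) ->
  induces_connected e (\bigcap_(F <- s) F).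
Proof.
move=> te; elim: s => [|F s IH] H; first by rewrite big_nil; exact: conn_setT.
rewrite big_cons; apply: inter_conn => //; first by apply: H; rewrite inE eqxx.
by apply: IH => G Gs; apply: H; rewrite inE Gs orbT.
Qed.

Lemma sub_bigcup (s : seq {set T}) F : F \in s -> F \subset \bigcup_(G <- s) G.
Proof.
elim: s => [|G s IH] //; rewrite inE big_cons => /orP [/eqP ->|Fs].
  exact: subsetUl.
by apply: subset_trans (IH Fs) _; exact: subsetUr.
Qed.

Lemma mem_bigcup_seq (s : seq {set T}) x : x \in \bigcup_(G <- s) G ->
  exists2 F, F \in s & x \in F.
Proof.
elim: s => [|G s IH]; first by rewrite big_nil inE.
rewrite big_cons inE => /orP [xG|/IH [F Fs xF]].
  by exists G => //; rewrite inE eqxx.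
by exists F => //; rewrite inE Fs orbT.
Qed.

Lemma union_conn e (s : seq {set T}) :
  (forall F, F \in s -> induces_connected e F) ->
  intersection_connected s ->
  induces_connected e (\bigcup_(F <- s) F).
Proof.
move=> H ic x y xU yU.
set U := \bigcup_(F <- s) F.
have [Fx Fxs xFx] := mem_bigcup_seq xU.
have [Fy Fys yFy] := mem_bigcup_seq yU.
have ix : index Fx s < size s by rewrite index_mem.
have iy : index Fy s < size s by rewrite index_mem.
have gen : forall (p : seq 'I_(size s)) (a : 'I_(size s)),
    path [rel a b : 'I_(size s) | nth set0 s a :&: nth set0 s b != set0] a p ->
    (forall z, z \in nth set0 s a -> connect (induced e U) x z) ->
    forall z, z \in nth set0 s (last a p) -> connect (induced e U) x z.
  elim=> [|b p IH] a //= /andP [rab pp] Ha; apply: IH => // z zb.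
  case/set0Pn: rab => w; rewrite inE => /andP [wa wb].
  apply: connect_trans (Ha _ wa) _.
  have bs : nth set0 s b \in s by apply: mem_nth.
  by apply: (conn_mono (sub_bigcup bs)); apply: H.
case/connectP: (ic (Ordinal ix) (Ordinal iy)) => p pp lE.
have := gen p (Ordinal ix) pp; rewrite -lE /= nth_index //; apply => //.
  move=> z zx; apply: (conn_mono (sub_bigcup Fxs)); exact: H.
by rewrite nth_index.
Qed.

Lemma obtainable_conn e (E : seq {set T}) A : is_tree e ->
  (forall F, F \in E -> induces_connected e F) ->
  obtainable E A -> induces_connected e A.
Proof.
move=> te HE; elim=> [F FE|s _ _ IH _|s _ _ IH ic].
- exact: HE.
- exact: bigcap_conn.
- exact: union_conn.
Qed.

Lemma card1_conn e A : #|A| <= 1 -> induces_connected e A.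
Proof.
move=> /card_le1_eqP h x y xA yA; rewrite (h x y xA yA); exact: connect0.
Qed.

Lemma Comp_conn e (E : seq {set T}) A : is_tree e ->
  (forall F, F \in E -> induces_connected e F) ->
  Comp E A -> induces_connected e A.
Proof.
move=> te HE [->|[h|[_ h]]].
- exact: conn_setT.
- by apply: card1_conn; rewrite h.
- exact: obtainable_conn h.
Qed.

Lemma edge_Comp (E : seq {set T}) F : F \in E -> Comp E F.
Proof.
move=> FE; case: (eqVneq F setT) => [->|nT]; first by left.
by right; right; split => //; apply: obt_edge.
Qed.

Lemma basis_conn e (E : seq {set T}) A :
  (forall F, basis (Comp E) F -> induces_connected e F) ->
  Comp E A -> induces_connected e A.
Proof.
move=> HB.
have [n leAn] := ubnP #|A|; elim: n A leAn => // n IH A leAn CA.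
case: (leqP #|A| 1) => [h|lt1]; first exact: card1_conn.
case: (classic (basis (Comp E) A)) => [bA|nbA]; first exact: HB.
have [s [s0 Hs ic <-]] : exists s : seq {set T},
      [/\ 0 < size s, (forall F, F \in s -> Comp E F /\ F \proper A),
          intersection_connected s & \bigcup_(F <- s) F = A].
  by apply: NNPP => hn; apply: nbA; split.
apply: union_conn ic => F Fs; have [CF pFA] := Hs F Fs.
apply: IH CF; apply: leq_trans (proper_card pFA) _; rewrite -ltnS; exact: leAn.
Qed.

End Aux.

Theorem mainTheorem2 (T : finType) (E : seq {set T}) :
  0 < #|T| ->
  (forall F, F \in E -> F != set0) ->
  (hypertree (edges_of E) <-> hypertree (Comp E)) /\
  (hypertree (edges_of E) <-> hypertree (basis (Comp E))).
Proof.
move=> _ _.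
have HtoC : hypertree (edges_of E) -> hypertree (Comp E).
  case=> e [te HE]; exists e; split => // A CA.
  exact: (Comp_conn te HE).
have CtoH : hypertree (Comp E) -> hypertree (edges_of E).
  case=> e [te HC]; exists e; split => // F FE.
  exact: HC (edge_Comp FE).
split; split => //.
  move=> /HtoC [e [te HC]]; exists e; split => // A [CA _ _]; exact: HC.
case=> e [te HB]; exists e; split => // F FE.
exact: (basis_conn HB (edge_Comp FE)).
Qed.
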